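(* Let $G$ be a graph having a perfect 2-matching. Then there is a graph $G'$ on the same vertex set with $d_{G'}(v)=d_G(v)$ for every vertex $v$, such that $G'$ has a perfect 2-matching with at most one odd cycle.
   Context: All graphs are finite and simple. A perfect 2-matching of a graph is a spanning subgraph each of whose connected components is either a $K_2$ (a single edge) or an odd cycle. *)

(* Defs.v *)
From mathcomp Require Import all_boot.
Set Implicit Arguments. Unset Strict Implicit. Unset Printing Implicit Defensive.

Definition simple_graph (T : finType) (e : rel T) : Prop :=
  symmetric e /\ irreflexive e.

Definition deg (T : finType) (e : rel T) (v : T) : nat := #|[set u | e v u]|.

Definition spanning_subgraph (T : finType) (e F : rel T) : Prop :=
  symmetric F /\ (forall x y, F x y -> e x y).

Definition component (T : finType) (F : rel T) (x : T) : {set T} :=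
  [set y | connect F x y].

Definition components (T : finType) (F : rel T) : {set {set T}} :=
  [set component F x | x : T].

Definition is_K2 (T : finType) (F : rel T) (C : {set T}) : Prop :=
  exists x y, [/\ x != y, C = [set x; y] & F x y].

Definition is_odd_cycle (T : finType) (F : rel T) (C : {set T}) : Prop :=
  exists s : seq T,
    [/\ uniq s, 3 <= size s, odd (size s), C = [set x in s] &
        forall x y, x \in C -> y \in C ->
          F x y = (y == next s x) || (x == next s y)].

Definition perfect_2matching (T : finType) (e F : rel T) : Prop :=
  spanning_subgraph e F /\
  forall C, C \in components F -> is_K2 F C \/ is_odd_cycle F C.

Definition at_most_one_odd_cycle (T : finType) (F : rel T) : Prop :=
  forall C1 C2, C1 \in components F -> C2 \in components F ->
    is_odd_cycle F C1 -> is_odd_cycle F C2 -> C1 = C2.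

(* Main.v *)
Require Import Defs.
From mathcomp Require Import all_boot.
From Stdlib Require Import Classical.
Set Implicit Arguments. Unset Strict Implicit. Unset Printing Implicit Defensive.

Section Gen.
Variable T : finType.

Lemma comp_sub (F : rel T) (A : {set T}) x :
  x \in A -> (forall u v, u \in A -> F u v -> v \in A) -> component F x \subset A.
Proof.
move=> xA cl; apply/subsetP => y; rewrite inE => /connectP [p].
elim: p x xA => [|z p IH] x xA /=; first by move=> _ ->.
by case/andP => Fxz pth ly; apply: (IH z) => //; apply: cl Fxz.
Qed.

Lemma comp_closed (F : rel T) x u v : u \in component F x -> F u v -> v \in component F x.
Proof. rewrite !inE => cu Fuv; exact: connect_trans cu (connect1 Fuv). Qed.

Lemma comp_mem (F : rel T) C x : symmetric F -> C \in components F -> x \in C ->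
  C = component F x.
Proof.
move=> Fs /imsetP [y _ ->]; rewrite inE => cyx; apply/setP => z; rewrite !inE.
apply/idP/idP => H.
  by apply: connect_trans H; rewrite (sym_connect_sym Fs).
exact: connect_trans cyx H.
Qed.

Lemma connect_transfer (F G : rel T) (U : {set T}) :
  (forall u v, F u v -> (u \in U) = (v \in U)) ->
  (forall u v, u \notin U -> F u v -> G u v) ->
  forall x y, x \notin U -> connect F x y -> connect G x y.
Proof.
move=> cl sub x y xU /connectP [p].
elim: p x xU => [|z p IH] x xU /=; first by move=> _ ->; exact: connect0.
case/andP => Fxz pth ly; apply: connect_trans (connect1 (sub _ _ xU Fxz)) (IH z _ pth ly).
by rewrite -(cl _ _ Fxz).
Qed.

Lemma K2_transfer (F G : rel T) (C : {set T}) :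
  (forall u v, u \in C -> v \in C -> F u v = G u v) -> is_K2 F C -> is_K2 G C.
Proof.
move=> ag [x [y [xy Cd Fxy]]]; exists x, y; split => //.
by rewrite -ag // Cd !inE eqxx ?orbT.
Qed.

Lemma odd_transfer (F G : rel T) (C : {set T}) :
  (forall u v, u \in C -> v \in C -> F u v = G u v) -> is_odd_cycle F C -> is_odd_cycle G C.
Proof.
move=> ag [s [u sz o Cd adj]]; exists s; split => // x y xC yC.
by rewrite -ag // adj.
Qed.

Definition pidx i := if odd i then i.-1 else i.+1.
Definition pp (L : seq T) x := nth x L (pidx (index x L)).

Lemma pidx_lt (L : seq T) i : ~~ odd (size L) -> i < size L -> pidx i < size L.
Proof.
rewrite /pidx => ev lt; case: ifP => oi; first by case: i oi lt => // i _ /ltnW.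
rewrite ltn_neqAle lt andbT; apply/eqP => E; by rewrite -E /= oi in ev.
Qed.

Lemma pidxK i : pidx (pidx i) = i.
Proof.
rewrite /pidx; case: i => [|i] //=; case: (boolP (odd i)) => oi /=.
  by rewrite oi.
by rewrite (negbTE oi).
Qed.

Lemma pidx_neq i : pidx i != i.
Proof.
rewrite /pidx; case: i => [|i] //=; case: ifP => _ /=.
  by rewrite ltn_eqF.
by rewrite gtn_eqF.
Qed.

Section Pair.
Variables (L : seq T).
Hypotheses (uL : uniq L) (eL : ~~ odd (size L)).

Lemma pp_mem x : x \in L -> pp L x \in L.
Proof. by move=> xL; rewrite /pp mem_nth // pidx_lt // index_mem. Qed.

Lemma pp_index x : x \in L -> index (pp L x) L = pidx (index x L).
Proof. by move=> xL; rewrite /pp index_uniq // pidx_lt // index_mem. Qed.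

Lemma ppK x : x \in L -> pp L (pp L x) = x.
Proof.
move=> xL; rewrite {1}/pp pp_index // pidxK (set_nth_default x) ?index_mem //.
exact: nth_index.
Qed.

Lemma pp_neq x : x \in L -> pp L x != x.
Proof.
move=> xL; apply/eqP => E; have := pp_index xL; rewrite E => /esym/eqP.
by rewrite (negbTE (pidx_neq _)).
Qed.

Lemma pp_edge (E : rel T) z : symmetric E ->
  (forall i, ~~ odd i -> i.+1 < size L -> E (nth z L i) (nth z L i.+1)) ->
  forall x, x \in L -> E x (pp L x).
Proof.
move=> Es H x xL; have iL : index x L < size L by rewrite index_mem.
rewrite /pp /pidx (set_nth_default z) ?(pidx_lt eL iL) // -{1}(nth_index z xL).
case: ifP => oi.
  case: (index x L) oi iL => [|i] //= oi iL; rewrite Es; apply: H => //.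
apply: H; first by rewrite oi.
by move: (pidx_lt eL iL); rewrite /pidx oi.
Qed.
End Pair.

End Gen.

Section Step.
Variable T : finType.

Definition mu (F : rel T) := #|[set x | #|component F x| != 2]|.

Lemma cyc_edge (F : rel T) (s : seq T) i a t k : uniq s ->
  (forall x y, x \in [set x in s] -> y \in [set x in s] ->
     F x y = (y == next s x) || (x == next s y)) ->
  rot i s = a :: t -> k.+1 < size t -> F (nth a t k) (nth a t k.+1).
Proof.
move=> us adj R kt.
have ut : uniq (a :: t) by rewrite -R rot_uniq.
have kt' : k < size t by apply: ltnW.
have xt : nth a t k \in t by rewrite mem_nth.
have xs : forall y, y \in t -> y \in [set x in s].
  by move=> y yt; rewrite inE -(mem_rot i) R inE yt orbT.
rewrite adj ?xs ?mem_nth //; apply/orP; left.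
rewrite -(next_rot i us) R next_nth inE xt orbT /=.
have xa : (nth a t k == a) = false.
  by apply/negP => /eqP E; move: ut; rewrite /= -E xt.
by rewrite (eq_sym a) xa index_uniq //; move: ut => /andP [].
Qed.

Lemma step (e F : rel T) (C1 C2 : {set T}) a c (e2 : rel T) :
  perfect_2matching e F -> C1 \in components F -> C2 \in components F ->
  is_odd_cycle F C1 -> is_odd_cycle F C2 -> C1 != C2 -> a \in C1 -> c \in C2 ->
  symmetric e2 -> e2 a c ->
  (forall x y, F x y -> x != a -> x != c -> y != a -> y != c -> e2 x y) ->
  exists F2, perfect_2matching e2 F2 /\ mu F2 < mu F.
Proof.
move=> [[Fs Fe] Fcomp] C1c C2c [s1 [u1 sz1 o1 C1d adj1]] [s2 [u2 sz2 o2 C2d adj2]].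
move=> C12 aC1 cC2 e2s e2ac e2F.
have adj1' := adj1; rewrite C1d in adj1'.
have adj2' := adj2; rewrite C2d in adj2'.
have dis : forall x, x \in C1 -> x \in C2 = false.
  move=> x xC1; apply/negP => xC2; case/eqP: C12.
  by rewrite (comp_mem Fs C1c xC1) (comp_mem Fs C2c xC2).
have cl1 : forall u v, F u v -> (u \in C1) = (v \in C1).
  move=> u v Fuv; rewrite (comp_mem Fs C1c aC1); apply/idP/idP => H.
    exact: comp_closed H Fuv.
  by apply: comp_closed H _; rewrite Fs.
have cl2 : forall u v, F u v -> (u \in C2) = (v \in C2).
  move=> u v Fuv; rewrite (comp_mem Fs C2c cC2); apply/idP/idP => H.
    exact: comp_closed H Fuv.
  by apply: comp_closed H _; rewrite Fs.
have as1 : a \in s1 by move: aC1; rewrite C1d inE.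
have cs2 : c \in s2 by move: cC2; rewrite C2d inE.
case: (rot_to as1) => i1 t1 R1.
case: (rot_to cs2) => i2 t2 R2.
have m1 u : (u \in C1) = (u == a) || (u \in t1) by rewrite C1d inE -(mem_rot i1) R1 inE.
have m2 u : (u \in C2) = (u == c) || (u \in t2) by rewrite C2d inE -(mem_rot i2) R2 inE.
pose L := [:: a, c & t1 ++ t2].
have mL u : (u \in L) = (u \in C1) || (u \in C2).
  by rewrite m1 m2 /L !inE mem_cat; case: (u == a); case: (u == c); case: (u \in t1); case: (u \in t2).
have ut1 : uniq (a :: t1) by rewrite -R1 rot_uniq.
have ut2 : uniq (c :: t2) by rewrite -R2 rot_uniq.
have ac : (a == c) = false by apply/negP => /eqP E; move: cC2; rewrite -E dis.
have t1C1 u : u \in t1 -> u \in C1 by move=> h; rewrite m1 h orbT.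
have t2C2 u : u \in t2 -> u \in C2 by move=> h; rewrite m2 h orbT.
have nt1a u : u \in t1 -> (u == a) = false.
  by move=> h; apply/negP => /eqP E; move: ut1; rewrite /= -E h.
have nt2c u : u \in t2 -> (u == c) = false.
  by move=> h; apply/negP => /eqP E; move: ut2; rewrite /= -E h.
have nt1c u : u \in t1 -> (u == c) = false.
  by move=> h; apply/negP => /eqP E; move: (dis _ (t1C1 _ h)); rewrite E cC2.
have nt2a u : u \in t2 -> (u == a) = false.
  by move=> h; apply/negP => /eqP E; move: (dis _ aC1); rewrite -E t2C2.
have uL : uniq L.
  rewrite /L /= inE mem_cat negb_or ac /= mem_cat cat_uniq.
  apply/and5P; split.
  - by apply/negP => /orP [/nt1a|/nt2a]; rewrite eqxx.
  - by apply/negP => /orP [/nt1c|/nt2c]; rewrite eqxx.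
  - by move: ut1 => /andP [].
  - by apply/hasPn => u /t2C2 h; apply/negP => /t1C1 h1; rewrite dis in h.
  - by move: ut2 => /andP [].
have ev1 : ~~ odd (size t1).
  by move: o1; rewrite -(size_rot i1) R1 /=; case: (odd (size t1)).
have ev2 : ~~ odd (size t2).
  by move: o2; rewrite -(size_rot i2) R2 /=; case: (odd (size t2)).
have eL : ~~ odd (size L) by rewrite /L /= size_cat oddD negbK; move: ev1 ev2; do 2 case: (odd _).
have edges : forall i, ~~ odd i -> i.+1 < size L -> e2 (nth a L i) (nth a L i.+1).
  case=> [|[|j]] //= ej; rewrite /= negbK in ej; rewrite size_cat !ltnS => jt.
  rewrite !nth_cat; case: (ltnP j.+1 (size t1)) => h.
    rewrite (ltnW h).
    have F12 := cyc_edge u1 adj1' R1 h.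
    have x1 : nth a t1 j \in t1 by rewrite mem_nth // ltnW.
    have y1 : nth a t1 j.+1 \in t1 by rewrite mem_nth.
    by apply: e2F; rewrite // ?nt1a ?nt1c.
  case: (ltnP j (size t1)) => h2.
    have E : j.+1 = size t1 by apply/eqP; rewrite eqn_leq h2 h.
    by move: ev1; rewrite -E /= ej.
  rewrite subSn // .
  have h3 : (j - size t1).+1 < size t2.
    by rewrite -subSn // ltn_subLR // ltnW.
  have F12 := cyc_edge u2 adj2' R2 h3.
  have x1 : nth a t2 (j - size t1) \in t2 by rewrite mem_nth // ltnW.
  have y1 : nth a t2 (j - size t1).+1 \in t2 by rewrite mem_nth.
  rewrite (set_nth_default a c (ltnW h3)) (set_nth_default a c h3) in F12.
  by apply: e2F; rewrite // ?nt2a ?nt2c.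
pose F2 := fun u v => if (u \in L) || (v \in L) then (u \in L) && (v == pp L u) else F u v.
have cl2F u v : F2 u v -> (u \in L) = (v \in L).
  rewrite /F2; case: ifP => [_ /andP [uL' /eqP ->] | /norP [/negbTE -> /negbTE ->] _] //.
  by rewrite uL' pp_mem.
have F2s : symmetric F2.
  have imp u v : F2 u v -> F2 v u.
    rewrite /F2; case: ifP => [_ /andP [uL' /eqP ->] | H h].
      by rewrite pp_mem // uL' /= ppK // eqxx.
    by rewrite orbC H Fs.
  by move=> u v; apply/idP/idP; apply: imp.
have aL : a \in L by rewrite inE eqxx.
have cL : c \in L by rewrite !inE eqxx orbT.
have F2e u v : F2 u v -> e2 u v.
  rewrite /F2; case: ifP => [_ /andP [uL' /eqP ->] | /norP [uL' vL] Fuv].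
    exact: (pp_edge eL e2s edges).
  apply: e2F => //; apply/eqP => E; by rewrite E ?aL ?cL in uL' vL.
have compL x : x \in L -> component F2 x = [set x; pp L x].
  move=> xL; apply/eqP; rewrite eqEsubset; apply/andP; split.
    apply: comp_sub; first by rewrite !inE eqxx.
    move=> u v; rewrite !inE => /orP [/eqP-> | /eqP ->] h.
      by rewrite /F2 xL /= in h; rewrite h orbT.
    by rewrite /F2 pp_mem //= ppK // in h; rewrite h.
  apply/subsetP => u; rewrite !inE => /orP [/eqP -> | /eqP ->]; first exact: connect0.
  by apply: connect1; rewrite /F2 xL /= eqxx.
have compN x : x \notin L -> component F2 x = component F x.
  move=> xL; apply/setP => y; rewrite !inE; apply/idP/idP.
    apply: (connect_transfer (U := [set u in L])); last by rewrite inE.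
      by move=> u v h; rewrite !inE; apply: cl2F.
    move=> u v; rewrite inE => uL' h.
    have vL : v \notin L by rewrite -(cl2F _ _ h).
    by move: h; rewrite /F2 (negbTE uL') (negbTE vL).
  apply: (connect_transfer (U := [set u in L])); last by rewrite inE.
    by move=> u v h; rewrite !in_set !mL (cl1 _ _ h) (cl2 _ _ h).
  move=> u v; rewrite inE => uL' h.
  have vL : v \notin L by rewrite mL -(cl1 _ _ h) -(cl2 _ _ h) -mL.
  by rewrite /F2 (negbTE uL') (negbTE vL).
exists F2; split.
  split; first by split.
  move=> C /imsetP [x _ ->].
  case: (boolP (x \in L)) => xL.
    left; rewrite compL //; exists x, (pp L x); split => //.
      by rewrite eq_sym pp_neq.
    by rewrite /F2 xL /= eqxx.
  rewrite compN //.
  have nL : forall u, u \in component F x -> u \notin L.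
    move=> u uc.
    have sub : component F x \subset [set u | u \notin L].
      apply: comp_sub; first by rewrite in_set.
      move=> w v; rewrite !in_set => wL h.
      by rewrite mL -(cl1 _ _ h) -(cl2 _ _ h) -mL.
    by move/subsetP: sub => /(_ u uc); rewrite in_set.
  have ag : forall u v, u \in component F x -> v \in component F x -> F u v = F2 u v.
    by move=> u v /nL uL' /nL vL; rewrite /F2 (negbTE uL') (negbTE vL).
  have cc : component F x \in components F by apply/imsetP; exists x.
  case: (Fcomp _ cc) => H; [left; exact: K2_transfer H | right; exact: odd_transfer H].
rewrite /mu; apply: proper_card; apply/properP; split.
  apply/subsetP => x; rewrite !inE; case: (boolP (x \in L)) => xL.
    by rewrite compL // cards2 (eq_sym x) pp_neq.
  by rewrite compN.
exists a.
  rewrite inE -(comp_mem Fs C1c aC1) C1d cardsE (card_uniqP u1).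
  by apply/negP => /eqP E; rewrite E in sz1.
by rewrite inE compL // cards2 (eq_sym a) pp_neq.
Qed.

End Step.

Section Swap.
Variable T : finType.

Definition pr (x y u v : T) := ((x == u) && (y == v)) || ((x == v) && (y == u)).

Lemma prC x y u v : pr x y u v = pr y x u v.
Proof. by rewrite /pr; case: (x == u); case: (x == v); case: (y == u); case: (y == v). Qed.

Lemma prxx x u v : u != v -> pr x x u v = false.
Proof.
move=> uv; rewrite /pr; case: (eqVneq x u) => [->|xu]; first by rewrite (negbTE uv) andbF.
by rewrite ?andbF.
Qed.

Lemma deg_swap (e e2 : rel T) v w z : e v w -> ~~ e v z ->
  (forall u, e2 v u = (u == z) || ((u != w) && e v u)) -> deg e2 v = deg e v.
Proof.
move=> vw nvz H; rewrite /deg.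
have -> : [set u | e2 v u] = z |: ([set u | e v u] :\ w) by apply/setP => u; rewrite !inE H.
rewrite cardsU1 (cardsD1 w [set u | e v u]) !inE vw (negbTE nvz) andbF /=.
by rewrite add1n.
Qed.

Lemma swap_case (e F : rel T) (C1 C2 : {set T}) :
  simple_graph e -> perfect_2matching e F -> C1 \in components F -> C2 \in components F ->
  is_odd_cycle F C1 -> is_odd_cycle F C2 -> C1 != C2 ->
  exists e2, [/\ simple_graph e2, (forall v, deg e2 v = deg e v) &
    exists F2, perfect_2matching e2 F2 /\ mu F2 < mu F].
Proof.
move=> [es ei] P C1c C2c O1 O2 C12.
have P' := P; move: P' => [[Fs Fe] Fcomp].
have [a aC1] : exists a, a \in C1.
  by case/imsetP: C1c => a _ ->; exists a; rewrite inE connect0.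
have [c cC2] : exists c, c \in C2.
  by case/imsetP: C2c => c _ ->; exists c; rewrite inE connect0.
have O1' := O1; have O2' := O2.
move: O1' O2' => [s1 [u1 sz1 o1 C1d adj1]] [s2 [u2 sz2 o2 C2d adj2]].
have dis : forall x, x \in C1 -> x \in C2 = false.
  move=> x xC1; apply/negP => xC2; case/eqP: C12.
  by rewrite (comp_mem Fs C1c xC1) (comp_mem Fs C2c xC2).
set b := next s1 a.
set d := next s2 c.
have as1 : a \in s1 by move: aC1; rewrite C1d inE.
have cs2 : c \in s2 by move: cC2; rewrite C2d inE.
have bC1 : b \in C1 by rewrite C1d inE mem_next.
have dC2 : d \in C2 by rewrite C2d inE mem_next.
have Fab : F a b by rewrite adj1 // eqxx.
have Fcd : F c d by rewrite adj2 // eqxx.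
have eab := Fe _ _ Fab.
have ecd := Fe _ _ Fcd.
have neq x y : x \in C1 -> y \in C2 -> (x == y) = false.
  by move=> xC yC; apply/negP => /eqP E; rewrite E in xC; by rewrite dis in yC.
have ac := neq _ _ aC1 cC2.
have ad := neq _ _ aC1 dC2.
have bc := neq _ _ bC1 cC2.
have bd := neq _ _ bC1 dC2.
have ca : (c == a) = false by rewrite eq_sym.
have da : (d == a) = false by rewrite eq_sym.
have cb : (c == b) = false by rewrite eq_sym.
have db : (d == b) = false by rewrite eq_sym.
have ab : (a == b) = false by apply/negP => /eqP E; move: (ei a); rewrite {2}E eab.
have cd : (c == d) = false by apply/negP => /eqP E; move: (ei c); rewrite {2}E ecd.
have ba : (b == a) = false by rewrite eq_sym.
have dc : (d == c) = false by rewrite eq_sym.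
case: (boolP (e a c)) => eac.
  have [F2 [P2 lt]] := step P C1c C2c O1 O2 C12 aC1 cC2 es eac (fun x y h _ _ _ _ => Fe x y h).
  by exists e; split => //; exists F2.
case: (boolP (e b d)) => ebd.
  have [F2 [P2 lt]] := step P C1c C2c O1 O2 C12 bC1 dC2 es ebd (fun x y h _ _ _ _ => Fe x y h).
  by exists e; split => //; exists F2.
pose e2 := fun x y => (e x y && ~~ pr x y a b && ~~ pr x y c d) || pr x y a c || pr x y b d.
have e2s : symmetric e2 by move=> x y; rewrite /e2 es (prC x y) (prC x y) (prC x y) (prC x y).
have e2i : irreflexive e2.
  by move=> x; rewrite /e2 ei (prxx x (negbT ac)) (prxx x (negbT bd)).
have e2ac : e2 a c by rewrite /e2 /pr !eqxx /= orbT.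
have e2F : forall x y, F x y -> x != a -> x != c -> y != a -> y != c -> e2 x y.
  move=> x y h xa xc ya yc.
  by rewrite /e2 /pr (Fe _ _ h) (negbTE xa) (negbTE xc) (negbTE ya) (negbTE yc) /= !andbF.
have [F2 [P2 lt]] := step P C1c C2c O1 O2 C12 aC1 cC2 e2s e2ac e2F.
exists e2; split => //; last by exists F2.
have ne x y : ~~ e x y -> ~~ e y x by rewrite es.
move=> v; case: (eqVneq v a) => [->|va].
  apply: (deg_swap eab eac) => u.
  rewrite /e2 /pr !eqxx ?ab ?ba ?ac ?ca ?ad ?da ?bc ?cb ?bd ?db ?cd ?dc /=.
  by case: (u == c); case: (u == b); case: (e a u); rewrite ?andbF ?orbF.
case: (eqVneq v b) => [->|vb].
  apply: (deg_swap (w := a) _ ebd) => [|u]; first by rewrite es.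
  rewrite /e2 /pr !eqxx ?ab ?ba ?ac ?ca ?ad ?da ?bc ?cb ?bd ?db ?cd ?dc /=.
  by case: (u == a); case: (u == d); case: (e b u); rewrite ?andbF ?orbF.
case: (eqVneq v c) => [->|vc].
  apply: (deg_swap (w := d) ecd (ne _ _ eac)) => u.
  rewrite /e2 /pr !eqxx ?ab ?ba ?ac ?ca ?ad ?da ?bc ?cb ?bd ?db ?cd ?dc /=.
  by case: (u == a); case: (u == d); case: (e c u); rewrite ?andbF ?orbF.
case: (eqVneq v d) => [->|vd].
  apply: (deg_swap (w := c) _ (ne _ _ ebd)) => [|u]; first by rewrite es.
  rewrite /e2 /pr !eqxx ?ab ?ba ?ac ?ca ?ad ?da ?bc ?cb ?bd ?db ?cd ?dc /=.
  by case: (u == b); case: (u == c); case: (e d u); rewrite ?andbF ?orbF.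
have E : [set u | e2 v u] = [set u | e v u].
  apply/setP => u; rewrite !inE /e2 /pr.
  by rewrite (negbTE va) (negbTE vb) (negbTE vc) (negbTE vd) /= !andbT !orbF.
by rewrite /deg E.
Qed.

Lemma main_ind n (e : rel T) F : simple_graph e -> perfect_2matching e F -> mu F < n ->
  exists e' : rel T,
    [/\ simple_graph e',
        (forall v : T, deg e' v = deg e v) &
        exists F : rel T, perfect_2matching e' F /\ at_most_one_odd_cycle F].
Proof.
elim: n e F => [|n IH] e F S P lt //.
case: (classic (at_most_one_odd_cycle F)) => H.
  by exists e; split => //; exists F.
have [C1 [C2 [C1c C2c O1 O2 C12]]] : exists C1 C2, [/\ C1 \in components F,
   C2 \in components F, is_odd_cycle F C1, is_odd_cycle F C2 & C1 != C2].
  apply: NNPP => N; apply: H => C1 C2 h1 h2 o1 o2; apply: NNPP => ne; apply: N.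
  exists C1, C2; split => //; exact/eqP.
have [e2 [S2 D2 [F2 [P2 lt2]]]] := swap_case S P C1c C2c O1 O2 C12.
have [e' [S' D' R']] := IH e2 F2 S2 P2 (leq_trans lt2 lt).
by exists e'; split => // v; rewrite D' D2.
Qed.
End Swap.

Theorem lemma18 (T : finType) (e : rel T) :
  simple_graph e ->
  (exists F : rel T, perfect_2matching e F) ->
  exists e' : rel T,
    [/\ simple_graph e',
        (forall v : T, deg e' v = deg e v) &
        exists F : rel T, perfect_2matching e' F /\ at_most_one_odd_cycle F].
Proof.
move=> S [F P]; exact: (@main_ind T (mu F).+1 e F S P (ltnSn _)).
Qed.
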